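(* Let $F$ be an infinite field, let $k\ge 1$, let $\boldsymbol{X}=(X_1,\ldots,X_k)$ be a tuple of pairwise disjoint finite sets of variables, let $f\in F\langle \boldsymbol{X}\rangle = F\langle X_1\rangle\otimes_F\cdots\otimes_F F\langle X_k\rangle$, let $n\ge 1$, and let $L$ be a field extending $F$. Then the following are equivalent: (i) the partially commutative identity $f=0$ holds in $M_n(L)\otimes_F\cdots\otimes_F M_n(L)$ ($k$ factors), i.e. $\widetilde{\boldsymbol{v}}(f)=0$ for every valuation $\boldsymbol{v}=(v_1,\ldots,v_k)$ with $v_i:X_i\to M_n(L)$; (ii) $\Phi_n(f)=0$. Moreover, if $f$ has degree strictly less than $n$, then (i) and (ii) are both equivalent to each of: (iii) $\Psi_n(f)=0$; (iv) $f=0$ in $F\langle \boldsymbol{X}\rangle$.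
   Context: $F\langle X\rangle$ denotes the free $F$-algebra on a set $X$ (polynomials in non-commuting variables from $X$; monomials are words in $X^*$). For a tuple $\boldsymbol{X}=(X_1,\ldots,X_k)$ of pairwise disjoint sets, $F\langle \boldsymbol{X}\rangle := F\langle X_1\rangle\otimes_F\cdots\otimes_F F\langle X_k\rangle$; every element can be written uniquely as a finite $F$-linear combination of distinct monomials $m_1\otimes\cdots\otimes m_k$ with $m_j\in X_j^*$ (so $F\langle\boldsymbol{X}\rangle$ is the free $F$-algebra, i.e. monoid algebra, of $X_1^*\times\cdots\times X_k^*$). The degree of a monomial $m_1\otimes\cdots\otimes m_k$ is $|m_1|+\cdots+|m_k|$, and the degree of a polynomial is the maximum degree of its monomials. A valuation in $(A_1,\ldots,A_k)$ ($F$-algebras) is a tuple $\boldsymbol{v}=(v_1,\ldots,v_k)$ of maps $v_i:X_i\to A_i$; each extends uniquely to an $F$-algebra homomorphism $\widetilde{v_i}:F\langle X_i\rangle\to A_i$, and $\widetilde{\boldsymbol{v}}:=\widetilde{v_1}\otimes\cdots\otimes\widetilde{v_k}:F\langle\boldsymbol{X}\rangle\to A_1\otimes_F\cdots\otimes_F A_k$. Tensor products of matrix algebras are identified with algebras of larger matrices via the Kronecker product: for $a\times a$ matrix $M=(m_{ij})$ and $b\times b$ matrix $N$, $M\otimes N$ is the $ab\times ab$ block matrix with blocks $m_{ij}N$. Generic matrices: for a finite set $X$ and each $x\in X$, introduce commuting indeterminates $t^{(x)}_{ij}$, $1\le i,j\le n$. The generic matrix algebra $F_n\langle X\rangle$ is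 the $F$-algebra of $n\times n$ matrices (with entries polynomials in the $t^{(x)}_{ij}$) generated by the matrices $(t^{(x)}_{ij})_{i,j}$, $x\in X$, and $\Phi^X_n:F\langle X\rangle\to F_n\langle X\rangle$ is the $F$-algebra homomorphism with $\Phi^X_n(x)=(t^{(x)}_{ij})_{i,j}$. Also $\Psi^X_n$ is the $F$-algebra homomorphism from $F\langle X\rangle$ to $n\times n$ matrices over the polynomial ring in the $t^{(x)}_{ij}$ sending $x$ to the matrix whose only nonzero entries are $t^{(x)}_{12},t^{(x)}_{23},\ldots,t^{(x)}_{n-1,n}$ on the superdiagonal (positions $(i,i+1)$). Finally $\Phi_n:=\Phi^{X_1}_n\otimes\cdots\otimes\Phi^{X_k}_n:F\langle\boldsymbol{X}\rangle\to F_n\langle X_1\rangle\otimes\cdots\otimes F_n\langle X_k\rangle$ and $\Psi_n:=\Psi^{X_1}_n\otimes\cdots\otimes\Psi^{X_k}_n$, both with values in $n^k\times n^k$ matrices. *)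

(* Defs.v *)
From HB Require Import structures.
From mathcomp Require Import all_boot all_order all_algebra.
From mathcomp Require Import mpoly.
Set Implicit Arguments. Unset Strict Implicit. Unset Printing Implicit Defensive.
Import Order.TTheory GRing.Theory.
Local Open Scope ring_scope.

Definition infinite_type (T : eqType) : Prop := forall s : seq T, exists x : T, x \notin s.

(* Variables: X_i = 'I_(d i) (block i of the tuple X = (X_1,...,X_k));
   the blocks are disjoint by construction (variables are tagged by i). *)

(* Monomials m_1 (x) ... (x) m_k with m_i a word in X_i^* *)
Definition mono (k : nat) (d : 'I_k -> nat) := {dffun forall i : 'I_k, seq 'I_(d i)}.

(* An element of F<X> given as a formal F-linear combination of monomials
   (a list of (coefficient, monomial)); repetitions are allowed and the
   element is determined by the coefficient function [coefp]. *)
Definition pcpoly (F : Type) (k : nat) (d : 'I_k -> nat) := seq (F * mono d).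

Definition coefp (F : nzRingType) k (d : 'I_k -> nat) (f : pcpoly F d) (m : mono d) : F :=
  \sum_(p <- f | p.2 == m) p.1.

Definition pc_zero (F : nzRingType) k (d : 'I_k -> nat) (f : pcpoly F d) : Prop :=
  forall m : mono d, coefp f m = 0.

(* deg f < n  (the zero polynomial has degree -oo) *)
Definition deg_lt (F : nzRingType) k (d : 'I_k -> nat) (f : pcpoly F d) (n : nat) : Prop :=
  forall m : mono d, coefp f m != 0 -> (\sum_(i < k) size (m i) < n)%N.

Definition wordval (R : pzRingType) (n m : nat) (v : 'I_m -> 'M[R]_n) (w : seq 'I_m) : 'M[R]_n :=
  foldr (fun x A => v x *m A) 1%:M w.

(* Kronecker product of k square n x n matrices A_0 (x) ... (x) A_(k-1),
   an n^k x n^k matrix: entry (r,c) is prod_i A_i (r_i, c_i) where r_i is the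
   i-th base-n digit of r (most significant first), i.e. the block convention
   M (x) N = (m_ij N). *)
Definition natentry (R : pzRingType) (n : nat) (A : 'M[R]_n) (a b : nat) : R :=
  match insub a, insub b with
  | Some a', Some b' => A a' b'
  | _, _ => 0
  end.

Definition digit (k n r : nat) (i : 'I_k) : nat := (r %/ n ^ (k.-1 - i)) %% n.

Definition kron (R : pzRingType) (k n : nat) (A : 'I_k -> 'M[R]_n) : 'M[R]_(n ^ k) :=
  \matrix_(r, c) \prod_(i < k) natentry (A i) (digit n r i) (digit n c i).

(* The F-structure on M_n(L) is given by the field embedding iota : F -> L.
   An element sum_p c_p a_(p,1) (x) ... (x) a_(p,k) of the tensor product over F is
   zero iff it is killed by every F-multilinear map (universal property). *)
Definition upd (T : Type) k (A : {ffun 'I_k -> T}) (i : 'I_k) (x : T) : {ffun 'I_k -> T} :=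
  [ffun j => if j == i then x else A j].

Definition multilinear (F L : nzRingType) (iota : F -> L) (n k : nat) (W : lmodType F)
  (mu : {ffun 'I_k -> 'M[L]_n} -> W) : Prop :=
  forall (A : {ffun 'I_k -> 'M[L]_n}) (i : 'I_k) (c : F) (x y : 'M[L]_n),
    mu (upd A i (iota c *: x + y)) = c *: mu (upd A i x) + mu (upd A i y).

Definition tensor_zero (F L : nzRingType) (iota : F -> L) (n k : nat)
  (t : seq (F * {ffun 'I_k -> 'M[L]_n})) : Prop :=
  forall (W : lmodType F) (mu : {ffun 'I_k -> 'M[L]_n} -> W),
    multilinear iota mu -> \sum_(p <- t) p.1 *: mu p.2 = 0.

Definition pcid_holds (F L : nzRingType) (iota : F -> L) (n : nat) k (d : 'I_k -> nat)
  (f : pcpoly F d) : Prop :=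
  forall v : (forall i : 'I_k, 'I_(d i) -> 'M[L]_n),
    tensor_zero iota
      [seq (p.1, [ffun i => wordval (v i) (p.2 i)]) | p : F * mono d <- f].

(* commuting indeterminates t^(x)_(a,b), x in X_i, 1 <= a,b <= n *)
Definition tvar (k : nat) (d : 'I_k -> nat) (n : nat) : finType :=
  {i : 'I_k & ('I_(d i) * 'I_n * 'I_n)%type}.

Definition nvars k (d : 'I_k -> nat) n : nat := #|{: tvar d n}|.

Definition tind k (d : 'I_k -> nat) n (i : 'I_k) (x : 'I_(d i)) (a b : 'I_n) : 'I_(nvars d n) :=
  enum_rank (Tagged (fun j : 'I_k => ('I_(d j) * 'I_n * 'I_n)%type) (x, a, b)).

Definition tpoly (F : nzRingType) k (d : 'I_k -> nat) n := {mpoly F[nvars d n]}.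

Definition genmx (F : nzRingType) k (d : 'I_k -> nat) n (i : 'I_k) (x : 'I_(d i))
  : 'M[tpoly F d n]_n :=
  \matrix_(a, b) 'X_(tind x a b).

Definition supmx (F : nzRingType) k (d : 'I_k -> nat) n (i : 'I_k) (x : 'I_(d i))
  : 'M[tpoly F d n]_n :=
  \matrix_(a, b) (if (b == a.+1 :> nat) then 'X_(tind x a b) else 0).

Definition Phi (F : nzRingType) k (d : 'I_k -> nat) n (f : pcpoly F d) : 'M[tpoly F d n]_(n ^ k) :=
  \sum_(p <- f) (p.1)%:MP *: kron (fun i => wordval (@genmx F k d n i) ((p : F * mono d).2 i)).

Definition Psi (F : nzRingType) k (d : 'I_k -> nat) n (f : pcpoly F d) : 'M[tpoly F d n]_(n ^ k) :=
  \sum_(p <- f) (p.1)%:MP *: kron (fun i => wordval (@supmx F k d n i) ((p : F * mono d).2 i)).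

(* Main.v *)
Require Import Defs.
From HB Require Import structures.
From mathcomp Require Import all_boot all_order all_algebra.
From mathcomp Require Import mpoly.
From mathcomp Require Import zify.
Set Implicit Arguments. Unset Strict Implicit. Unset Printing Implicit Defensive.
Import Order.TTheory GRing.Theory.
Local Open Scope ring_scope.
Lemma natentry_map (R S : pzRingType) (g : {additive R -> S}) n (A : 'M[R]_n) a b :
  natentry (map_mx g A) a b = g (natentry A a b).
Proof.
rewrite /natentry; case: insubP => [a' _ _|_]; last by rewrite raddf0.
case: insubP => [b' _ _|_]; last by rewrite raddf0.
by rewrite mxE.
Qed.

Lemma kron_map (R S : comPzRingType) (g : {rmorphism R -> S}) k n (A : 'I_k -> 'M[R]_n) :
  map_mx g (kron A) = kron (fun i => map_mx g (A i)).
Proof.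
apply/matrixP => r c; rewrite !mxE rmorph_prod; apply: eq_bigr => i _.
by rewrite natentry_map.
Qed.

Lemma wordval_map (R S : pzRingType) (g : {rmorphism R -> S}) n m (v : 'I_m -> 'M[R]_n) w :
  map_mx g (wordval v w) = wordval (fun x => map_mx g (v x)) w.
Proof.
elim: w => [|x w IH] /=; first by rewrite map_scalar_mx rmorph1.
by rewrite map_mxM IH.
Qed.

Lemma eq_kron (R : pzRingType) k n (A B : 'I_k -> 'M[R]_n) :
  (forall i, A i = B i) -> kron A = kron B.
Proof. by move=> H; apply/matrixP => r c; rewrite !mxE; apply: eq_bigr => i _; rewrite H. Qed.

Lemma eq_wordval (R : pzRingType) n m (v u : 'I_m -> 'M[R]_n) w :
  (forall x, v x = u x) -> wordval v w = wordval u w.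
Proof. by move=> H; elim: w => //= x w ->; rewrite H. Qed.
Section Digits.
Local Open Scope nat_scope.

Lemma base_repr n K r : 0 < n -> r < n ^ K -> r = \sum_(j < K) (r %/ n ^ j %% n) * n ^ j.
Proof.
move=> n0; elim: K r => [|K IH] r hr.
  by rewrite big_ord0; move: hr; rewrite expn0 ltnS leqn0 => /eqP.
rewrite big_ord_recl /= expn0 divn1 muln1.
have hq : r %/ n < n ^ K by rewrite ltn_divLR // -expnSr.
rewrite {1}(divn_eq r n) addnC; congr (_ + _).
rewrite {1}(IH _ hq) big_distrl /=; apply: eq_bigr => j _.
by rewrite /bump /= add1n expnS divnMA mulnCA mulnC.
Qed.

Lemma digit_lt k n r (i : 'I_k) : 0 < n -> digit n r i < n.
Proof. by move=> n0; rewrite /digit ltn_mod. Qed.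

Lemma digit_repr k n r : 0 < n -> r < n ^ k ->
  r = \sum_(i < k) digit n r i * n ^ (k.-1 - i).
Proof.
move=> n0 hr; rewrite {1}(base_repr n0 hr) (reindex_inj rev_ord_inj) /=.
apply: eq_bigr => i _; rewrite /digit /=.
by rewrite (_ : k - i.+1 = k.-1 - i) //; lia.
Qed.

Lemma digit_inj k n r r' : 0 < n -> r < n ^ k -> r' < n ^ k ->
  (forall i : 'I_k, digit n r i = digit n r' i) -> r = r'.
Proof.
move=> n0 hr hr' H; rewrite (digit_repr n0 hr) (digit_repr n0 hr').
by apply: eq_bigr => i _; rewrite H.
Qed.

End Digits.

Definition digo k n (hn : (0 < n)%N) (r : nat) (i : 'I_k) : 'I_n :=
  Ordinal (digit_lt r i hn).

Definition digf k n (hn : (0 < n)%N) (r : 'I_(n ^ k)) : {ffun 'I_k -> 'I_n} :=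
  [ffun i => digo hn r i].

Lemma digf_bij k n (hn : (0 < n)%N) : bijective (@digf k n hn).
Proof.
apply: inj_card_bij; last by rewrite card_ffun !card_ord.
move=> r r' /ffunP H; apply: val_inj; apply: (digit_inj hn (ltn_ord r) (ltn_ord r')) => i.
by have := H i; rewrite !ffunE => /(congr1 val).
Qed.

Lemma digf_surj k n (hn : (0 < n)%N) (a : {ffun 'I_k -> 'I_n}) :
  exists r : 'I_(n ^ k), forall i, digit n r i = a i.
Proof.
have [g _ gK] := digf_bij k hn.
exists (g a) => i; have := gK a => /ffunP /(_ i); rewrite ffunE => <-//.
Qed.

Lemma sum_digf k n (hn : (0 < n)%N) (V : nmodType) (G : {ffun 'I_k -> 'I_n} -> V) :
  \sum_(r : 'I_(n ^ k)) G (digf hn r) = \sum_(a : {ffun 'I_k -> 'I_n}) G a.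
Proof.
have [g dg gd] := digf_bij k hn.
by rewrite (reindex g) //=; [apply: eq_bigr => a _; rewrite gd | exists (digf hn) => x _ //].
Qed.
Section BaseInj.
Local Open Scope nat_scope.
Lemma base_inj B K (a b : nat -> nat) :
  (forall j, j < K -> a j < B) -> (forall j, j < K -> b j < B) ->
  \sum_(j < K) a j * B ^ j = \sum_(j < K) b j * B ^ j ->
  forall j, j < K -> a j = b j.
Proof.
elim: K a b => [|K IH] a b ha hb E j hj //.
have B0 : 0 < B := leq_ltn_trans (leq0n _) (ha 0 isT).
have sh (c : nat -> nat) : \sum_(j < K.+1) c j * B ^ j =
    c 0 + (\sum_(j < K) c j.+1 * B ^ j) * B.
  rewrite big_ord_recl /= expn0 muln1 big_distrl /=; congr (_ + _).
  by apply: eq_bigr => i _; rewrite /bump /= add1n expnSr mulnA.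
move: E; rewrite !sh => E.
have E0 : a 0 = b 0.
  have := congr1 (modn^~ B) E; rewrite addnC modnMDl addnC modnMDl.
  by rewrite !modn_small ?ha ?hb.
case: j hj => [|j] hj //.
apply: (IH (fun j => a j.+1) (fun j => b j.+1)) => //.
- by move=> i hi; apply: ha.
- by move=> i hi; apply: hb.
have := congr1 (divn^~ B) E; rewrite !divnDMl // !divn_small ?ha ?hb //.
Qed.
End BaseInj.

Lemma long_uniq (T : eqType) (Tinf : infinite_type T) K :
  exists s : seq T, uniq s /\ size s = K.
Proof.
elim: K => [|K [s [us ss]]]; first by exists [::].
have [x hx] := Tinf s; exists (x :: s) => /=; rewrite hx us ss; split => //.
Qed.

Lemma mpoly_zero_inf (F : fieldType) (Finf : infinite_type F) N (p : {mpoly F[N]}) :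
  (forall h : 'I_N -> F, p.@[h] = 0) -> p = 0.
Proof.
move=> Hz.
pose B := msize p.
pose enc (m : 'X_{1..N}) := (\sum_(j < N) m j * B ^ j)%N.
pose q : {poly F} := mmap (@polyC F) (fun i => 'X^(B ^ i)) p.
have qE : q = \sum_(m <- msupp p) p@_m *: 'X^(enc m).
  rewrite /q /mmap; apply/eq_bigr => m _; rewrite /mmap1 /= mul_polyC.
  congr (_ *: _); rewrite -prodrXr; apply: eq_bigr => i _.
  by rewrite -exprM mulnC.
have q0 : q = 0.
  have [s [us ss]] := long_uniq Finf (size q).
  apply: (roots_geq_poly_eq0 (rs := s)) => //; last by rewrite ss.
  apply/allP => t _; rewrite /root -horner_evalE /q /mmap rmorph_sum /=.
  apply/eqP; apply: etrans (Hz (fun i => t ^+ (B ^ i))); rewrite /meval /mmap.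
  apply: eq_bigr => m _; rewrite rmorphM /= horner_evalE hornerC.
  rewrite /mmap1 rmorph_prod; congr (_ * _); apply: eq_bigr => i _.
  by rewrite rmorphXn /= horner_evalE hornerXn.
apply/mpolyP => m0; rewrite mcoeff0.
have [hm0|] := boolP (m0 \in msupp p); last by move/memN_msupp_eq0.
have lt m i : m \in msupp p -> (m i < B)%N.
  move=> hm; apply: leq_ltn_trans (msize_mdeg_lt hm).
  by rewrite mdegE (bigD1 i) //= leq_addr.
have : q`_(enc m0) = p@_m0.
  rewrite qE coef_sum (bigD1_seq m0) ?msupp_uniq //= coefZ coefXn eqxx mulr1.
  rewrite big1_seq ?addr0 // => m /andP[ne hm]; rewrite coefZ coefXn.
  case: eqP; rewrite ?mulr0 // => /esym he; exfalso; move/negP: ne; apply.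
  apply/eqP/mnmP => j; rewrite !(mnm_nth 0).
  have := base_inj (a := fun j => nth 0 m j) (b := fun j => nth 0 m0 j) (K := N) (B := B).
  move=> /(_ _ _ _ j (ltn_ord j)) -> //.
  - by move=> i hi; have := lt m (Ordinal hi) hm; rewrite (mnm_nth 0).
  - by move=> i hi; have := lt m0 (Ordinal hi) hm0; rewrite (mnm_nth 0).
  - by move: he; rewrite /enc; under eq_bigr do rewrite (mnm_nth 0);
       under [in X in _ = X -> _]eq_bigr do rewrite (mnm_nth 0).
by rewrite q0 coef0 => <-.
Qed.
Lemma map_sumkron (F : fieldType) k (d : 'I_k -> nat) n (S : comNzRingType)
  (g : {rmorphism tpoly F d n -> S}) (f : pcpoly F d)
  (G : forall i : 'I_k, 'I_(d i) -> 'M[tpoly F d n]_n) :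
  map_mx g (\sum_(p <- f) (p.1)%:MP *: kron (fun i => wordval (G i) ((p : F * mono d).2 i)))
  = \sum_(p <- f) g (p.1)%:MP *: kron (fun i => wordval (fun x => map_mx g (G i x)) (p.2 i)).
Proof.
apply/matrixP => r c; rewrite mxE !summxE rmorph_sum; apply: eq_bigr => p _.
rewrite !mxE rmorphM /=; congr (_ * _).
rewrite rmorph_prod; apply: eq_bigr => i _.
by rewrite -wordval_map natentry_map.
Qed.
Definition supsel k (d : 'I_k -> nat) n (j : 'I_(nvars d n)) : bool :=
  let t := enum_val j in ((tagged t).2 == ((tagged t).1.2).+1 :> nat).

Definition psi_pt (F : fieldType) k (d : 'I_k -> nat) n (j : 'I_(nvars d n)) : tpoly F d n :=
  if supsel j then 'X_j else 0.

Lemma tindK k (d : 'I_k -> nat) n (i : 'I_k) (x : 'I_(d i)) (a b : 'I_n) :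
  enum_val (tind x a b) = Tagged (fun j : 'I_k => ('I_(d j) * 'I_n * 'I_n)%type) (x, a, b).
Proof. by rewrite /tind enum_rankK. Qed.

Lemma PhiE (F : fieldType) k (d : 'I_k -> nat) n (f : pcpoly F d) :
  Phi n f = \sum_(p <- f) (p.1)%:MP *: kron (fun i => wordval (@Defs.genmx F k d n i) (p.2 i)).
Proof. by []. Qed.

Lemma PsiE (F : fieldType) k (d : 'I_k -> nat) n (f : pcpoly F d) :
  Psi n f = \sum_(p <- f) (p.1)%:MP *: kron (fun i => wordval (@supmx F k d n i) (p.2 i)).
Proof. by []. Qed.

Lemma Phi_Psi (F : fieldType) k (d : 'I_k -> nat) n (f : pcpoly F d) :
  Phi n f = 0 -> Psi n f = 0.
Proof.
move=> H.
have := congr1 (map_mx (mmap (@mpolyC _ F) (@psi_pt F k d n))) H.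
rewrite map_mx0 PhiE map_sumkron PsiE => E; apply: etrans E; apply: eq_bigr => p _.
rewrite /= mmapC; congr (_ *: _); apply: eq_kron => i; apply: eq_wordval => x.
 apply/matrixP => a b; rewrite !mxE mmapX mmap1U.
by rewrite /psi_pt /supsel tindK.
Qed.
Lemma regroup (A : eqType) (T : eqType) (V : zmodType) (s : seq (A * T)) (G : A * T -> V) :
  \sum_(p <- s) G p = \sum_(m <- undup (map snd s)) \sum_(p <- s | p.2 == m) G p.
Proof.
rewrite [RHS](exchange_big_dep predT) //=.
apply: eq_big_seq => p hp.
rewrite (eq_bigl (fun m => m == p.2)); last by move=> m /=; rewrite eq_sym.
rewrite -big_filter filter_pred1_uniq ?undup_uniq ?big_seq1 // mem_undup; exact: map_f.
Qed.

Lemma zero_Phi (F : fieldType) k (d : 'I_k -> nat) n (f : pcpoly F d) :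
  pc_zero f -> Phi n f = 0.
Proof.
move=> H; rewrite PhiE regroup big1 // => m _.
rewrite (eq_bigr (fun p => (p.1)%:MP *: kron (fun i => wordval (@Defs.genmx F k d n i) (m i)))).
  by rewrite -scaler_suml -rmorph_sum /= -/(@Defs.coefp F k d f m) H scale0r.
by move=> p /eqP ->.
Qed.
Definition ordn n (hn : (0 < n)%N) (a : nat) : 'I_n := Ordinal (ltn_pmod a hn).

Lemma ordnE n (hn : (0 < n)%N) a : (a < n)%N -> val (ordn hn a) = a.
Proof. by move=> ha; rewrite /= modn_small. Qed.

Fixpoint enc k (d : 'I_k -> nat) n (hn : (0 < n)%N) (i : 'I_k) (a : nat) (w : seq 'I_(d i))
  : 'X_{1..nvars d n} :=
  match w with
  | [::] => 0%MM
  | x :: w' => (U_(tind x (ordn hn a) (ordn hn a.+1)) + enc hn a.+1 w')%MM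
  end.

Definition midx k (d : 'I_k -> nat) n (j : 'I_(nvars d n)) : nat := val (tagged (enum_val j)).1.2.

Lemma midx_tind k (d : 'I_k -> nat) n (i : 'I_k) (x : 'I_(d i)) (a b : 'I_n) :
  midx (tind x a b) = a.
Proof. by rewrite /midx tindK. Qed.

Lemma tag_tind k (d : 'I_k -> nat) n (i : 'I_k) (x : 'I_(d i)) (a b : 'I_n) :
  tag (enum_val (tind x a b)) = i.
Proof. by rewrite tindK. Qed.

Lemma tind_inj k (d : 'I_k -> nat) n (i : 'I_k) (x y : 'I_(d i)) (a b a' b' : 'I_n) :
  tind x a b = tind y a' b' -> x = y.
Proof.
move=> /enum_rank_inj E.
have := congr1 (tagged_as (Tagged (fun j : 'I_k => ('I_(d j) * 'I_n * 'I_n)%type) (x, a, b))) E.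
by rewrite !tagged_asE => -[].
Qed.

Lemma enc_out k (d : 'I_k -> nat) n (hn : (0 < n)%N) (i : 'I_k) a w (j : 'I_(nvars d n)) :
  tag (enum_val j) != i -> (@enc k d n hn i a w) j = 0%N.
Proof.
move=> hj; elim: w a => [|x w IH] a /=; first by rewrite mnm0E.
rewrite mnmDE IH addn0 mnm1E; case: eqP => // E.
by move: hj; rewrite -E tag_tind eqxx.
Qed.

Lemma enc_lo k (d : 'I_k -> nat) n (hn : (0 < n)%N) (i : 'I_k) b w (j : 'I_(nvars d n)) :
  (midx j < b)%N -> (b + size w <= n)%N -> (@enc k d n hn i b w) j = 0%N.
Proof.
elim: w b => [|x w IH] b hj hb /=; first by rewrite mnm0E.
rewrite mnmDE IH ?addn0; last 2 first.
- exact: ltnW.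
- by move: hb => /=; lia.
rewrite mnm1E; case: eqP => // E; exfalso.
have := midx_tind x (ordn hn b) (ordn hn b.+1); rewrite E ordnE; last first.
  by move: hb => /=; lia.
by move=> h; move: hj; rewrite h ltnn.
Qed.

Lemma enc_inj k (d : 'I_k -> nat) n (hn : (0 < n)%N) (i : 'I_k) (w w' : seq 'I_(d i)) a :
  @enc k d n hn i a w = enc hn a w' -> size w = size w' -> (a + size w < n)%N -> w = w'.
Proof.
elim: w w' a => [|x w IH] [|y w'] a //= E [] hs ha.
have ha1 : (a.+1 < n)%N by apply: leq_ltn_trans ha; rewrite addnS ltnS leq_addr.
have ha0 : (a < n)%N by apply: ltnW.
pose j0 := tind x (ordn hn a) (ordn hn a.+1).
have h1 : (enc hn a.+1 w) j0 = 0%N.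
  by apply: enc_lo; rewrite ?midx_tind ?ordnE //; lia.
have h2 : (enc hn a.+1 w') j0 = 0%N.
  by apply: enc_lo; rewrite ?midx_tind ?ordnE //; rewrite -hs; lia.
have exy : y = x.
  have := congr1 (fun M : 'X_{1..nvars d n} => M j0) E.
  rewrite /= !mnmDE h1 h2 !mnm1E eqxx; case: eqP => // /tind_inj -> //.
move: E; rewrite exy => /addmI E; congr (_ :: _).
by apply: IH E hs _; lia.
Qed.
Lemma wv_sup (F : fieldType) k (d : 'I_k -> nat) n (hn : (0 < n)%N) (i : 'I_k)
  (w : seq 'I_(d i)) (a b : 'I_n) :
  (wordval (@supmx F k d n i) w) a b =
  if (val b == a + size w)%N then 'X_[enc hn a w] else 0.
Proof.
elim: w a => [|x w IH] a /=.
  rewrite mxE addn0 mpolyX0 eq_sym -val_eqE.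
  by rewrite val_eqE; case: (b == a).
rewrite mxE.
case: (ltnP a.+1 n) => ha.
  pose j0 : 'I_n := Ordinal ha.
  rewrite (bigD1 j0) //= big1 ?addr0; last first.
    move=> j hj; rewrite mxE; case: eqP => [hj'|]; last by rewrite mul0r.
    by move: hj; rewrite -val_eqE /= hj' eqxx.
  rewrite mxE eqxx IH /= addSnnS.
  case: ifP => _; last by rewrite mulr0.
  rewrite -mpolyXD; congr 'X_[(U_(_) + _)%MM].
  have -> : ordn hn a = a by apply: val_inj; rewrite ordnE.
  by have -> : ordn hn a.+1 = j0 by apply: val_inj; rewrite ordnE.
rewrite big1; last first.
  move=> j _; rewrite mxE; case: eqP => [hj'|]; last by rewrite mul0r.
  by have := ltn_ord j; rewrite hj' ltnNge ha.
case: eqP => // hb; exfalso; have := ltn_ord b; rewrite hb.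
by move: ha; lia.
Qed.
Lemma natentry_ordn (R : pzRingType) n (hn : (0 < n)%N) (A : 'M[R]_n) a b :
  (a < n)%N -> (b < n)%N -> natentry A a b = A (ordn hn a) (ordn hn b).
Proof.
move=> ha hb; rewrite /natentry.
case: insubP => [a' _ ea|]; last by rewrite ha.
case: insubP => [b' _ eb|]; last by rewrite hb.
by congr (A _ _); apply: val_inj; rewrite ordnE.
Qed.

Lemma prod_ifX (R : comNzRingType) N k (P : 'I_k -> bool) (E : 'I_k -> 'X_{1..N}) :
  \prod_(i < k) (if P i then 'X_[E i] else 0 : {mpoly R[N]}) =
  if [forall i, P i] then 'X_[\sum_(i < k) E i] else 0.
Proof.
case: forallP => H.
  by rewrite -mprodXE; apply: eq_bigr => i _; rewrite H.
have [i hi] : exists i, ~~ P i.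
  by apply/existsP; rewrite -negb_forall; apply/forallP.
by rewrite (bigD1 i) //= (negbTE hi) mul0r.
Qed.

Lemma Psi_pc (F : fieldType) k (d : 'I_k -> nat) n (hn : (0 < n)%N) (f : pcpoly F d) :
  Psi n f = 0 -> deg_lt f n -> pc_zero f.
Proof.
move=> HP Hd m0; case: (eqVneq (Defs.coefp f m0) 0) => // hc.
have hs := Hd m0 hc.
have hsi i : (size (m0 i) < n)%N.
  by apply: leq_ltn_trans hs; rewrite (bigD1 i) //= leq_addr.
have [r hr] := digf_surj hn [ffun i : 'I_k => ordn hn 0].
have [c hcc] := digf_surj hn [ffun i : 'I_k => ordn hn (size (m0 i))].
have hr' (i : 'I_k) : digit n r i = 0%N by rewrite hr ffunE ordnE.
have hc' (i : 'I_k) : digit n c i = size (m0 i) by rewrite hcc ffunE ordnE.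
pose M0 := (\sum_(i < k) enc hn (i := i) 0 (m0 i))%MM.
suff : Defs.coefp f m0 = (Psi n f r c)@_M0 by rewrite HP mxE mcoeff0.
rewrite PsiE summxE raddf_sum /= /Defs.coefp big_mkcond /=.
apply: eq_bigr => p _; rewrite mxE mcoeffCM mxE.
rewrite (eq_bigr (fun i => if (size (m0 i) == size (p.2 i)) then 'X_[enc hn (i := i) 0 (p.2 i)] else 0)); last first.
  move=> i _; rewrite (natentry_ordn hn) ?digit_lt // wv_sup !ordnE ?digit_lt //.
  by rewrite hr' hc' add0n.
rewrite prod_ifX.
case: (eqVneq p.2 m0) => [->|ne].
  have -> : [forall i, size (m0 i) == size (m0 i)] by apply/forallP => i.
  by rewrite mcoeffX eqxx mulr1.
case: forallP => Hsz; last by rewrite mcoeff0 mulr0.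
rewrite mcoeffX; case: eqP => E; last by rewrite mulr0.
exfalso; move/eqP: ne; apply; apply/ffunP => i.
have hei : enc hn (i := i) 0 (p.2 i) = enc hn 0 (m0 i).
  apply/mnmP => j; case: (eqVneq (tag (enum_val j)) i) => [hj|hj]; last by rewrite !enc_out.
  have := congr1 (fun M : 'X_{1..nvars d n} => M j) E.
  rewrite /M0 !mnm_sumE (bigD1 i) //= [X in (_ + X)%N]big1 ?addn0; last first.
    by move=> i' hi'; rewrite enc_out // hj eq_sym.
  rewrite (bigD1 i) //= [X in (_ + X)%N]big1 ?addn0 //.
  by move=> i' hi'; rewrite enc_out // hj eq_sym.
apply: (enc_inj hei); first by rewrite (eqP (Hsz i)).
by rewrite add0n -(eqP (Hsz i)).
Qed.
Definition LF (F L : fieldType) (iota : {rmorphism F -> L}) : Type := L.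

Section LFinst.
Variables (F L : fieldType) (iota : {rmorphism F -> L}).
HB.instance Definition _ := GRing.Zmodule.on (LF iota).
Definition lf_scale (c : F) (x : LF iota) : LF iota := (iota c * (x : L) : L).
Fact lf_scaleA a b (v : LF iota) : lf_scale a (lf_scale b v) = lf_scale (a * b) v.
Proof. by rewrite /lf_scale rmorphM mulrA. Qed.
Fact lf_scale1 : left_id 1 lf_scale.
Proof. by move=> v; rewrite /lf_scale rmorph1 mul1r. Qed.
Fact lf_scaleDr : right_distributive lf_scale +%R.
Proof. by move=> a u v; rewrite /lf_scale mulrDr. Qed.
Fact lf_scaleDl (v : LF iota) : {morph lf_scale^~ v : a b / a + b}.
Proof. by move=> a b; rewrite /lf_scale rmorphD mulrDl. Qed.
HB.instance Definition _ := GRing.Zmodule_isLmodule.Build F (LF iota)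
  lf_scaleA lf_scale1 lf_scaleDr lf_scaleDl.
End LFinst.
Lemma natentry_lin (R : pzRingType) n (x y : 'M[R]_n) (a : R) r c :
  natentry (a *: x + y) r c = a * natentry x r c + natentry y r c.
Proof.
rewrite /natentry; case: insubP => [r' _ _|_]; last by rewrite mulr0 addr0.
case: insubP => [c' _ _|_]; last by rewrite mulr0 addr0.
by rewrite !mxE.
Qed.

Lemma kron_multilinear (F L : fieldType) (iota : {rmorphism F -> L}) n k (r c : 'I_(n ^ k)) :
  multilinear iota (fun A : {ffun 'I_k -> 'M[L]_n} => (kron (fun i => A i) r c : LF iota)).
Proof.
move=> A i a x y; rewrite !mxE.
rewrite (bigD1 i) //= [X in _ = _ *: X + _](bigD1 i) //= [X in _ = _ + X](bigD1 i) //=.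
rewrite !ffunE eqxx natentry_lin.
set P1 := \prod_(j < k | j != i) _; set P2 := \prod_(j < k | j != i) _; set P3 := \prod_(j < k | j != i) _.
have e2 : P2 = P1.
  by apply: eq_bigr => j hj; rewrite !ffunE (negbTE hj).
have e3 : P3 = P1.
  by apply: eq_bigr => j hj; rewrite !ffunE (negbTE hj).
rewrite e2 e3 /GRing.scale /= /lf_scale.
by rewrite mulrDl mulrA.
Qed.
Lemma pc_Phi (F : fieldType) (Finf : infinite_type F) k (d : 'I_k -> nat) n (f : pcpoly F d)
  (L : fieldType) (iota : {rmorphism F -> L}) :
  pcid_holds iota n f -> Phi n f = 0.
Proof.
move=> H; apply/matrixP => r c; rewrite [RHS]mxE.
apply: (mpoly_zero_inf Finf) => h.
pose V i (x : 'I_(d i)) : 'M[F]_n := \matrix_(a, b) h (tind x a b).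
pose v i (x : 'I_(d i)) := map_mx iota (V i x).
have := H v (LF iota) _ (kron_multilinear iota r c).
rewrite big_map /= => E.
apply: (fmorph_inj iota); rewrite rmorph0; apply: etrans E.
have E2 := map_sumkron (meval h) f (@Defs.genmx F k d n).
have := congr1 (fun M : 'M[F]_(n ^ k) => M r c) E2.
rewrite mxE -PhiE => ->.
rewrite summxE rmorph_sum; apply: eq_bigr => p _.
rewrite mxE rmorphM /GRing.scale /= /lf_scale.
rewrite mevalC; congr (_ * _).
rewrite !mxE rmorph_prod; apply: eq_bigr => i _.
rewrite ffunE -natentry_map wordval_map; congr natentry; apply: eq_wordval => x.
rewrite /v /V; apply/matrixP => a b; rewrite !mxE mevalXU //.
Qed.
Section Agree.
Variables (F : fieldType) (V : zmodType) (W : lmodType F) (act : F -> V -> V) (k : nat).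

Inductive spn (P : V -> Prop) : V -> Prop :=
  | spn0 : spn P 0
  | spnS c x y : P x -> spn P y -> spn P (act c x + y).

Lemma spnD P x y : spn P x -> spn P y -> spn P (x + y).
Proof.
move=> hx hy; elim: hx => [|c u w hu _ IH]; first by rewrite add0r.
by rewrite -addrA; apply: spnS.
Qed.

Lemma spn_sum P (I : Type) (r : seq I) (g : I -> V) :
  (forall i, spn P (g i)) -> spn P (\sum_(i <- r) g i).
Proof.
move=> H; elim: r => [|i r IH]; first by rewrite big_nil; apply: spn0.
by rewrite big_cons; apply: spnD.
Qed.

Lemma spn_act P c x : P x -> spn P (act c x).
Proof. by move=> hx; rewrite -[act c x]addr0; apply: spnS => //; apply: spn0. Qed.

Definition slotlin (mu : {ffun 'I_k -> V} -> W) :=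
  (forall A i c x y, mu (upd A i (act c x + y)) = c *: mu (upd A i x) + mu (upd A i y)) /\
  (forall A i, mu (upd A i 0) = 0).

Lemma upd_id (T : Type) (A : {ffun 'I_k -> T}) i : upd A i (A i) = A.
Proof. by apply/ffunP => j; rewrite ffunE; case: eqP => // ->. Qed.

Lemma upd_upd (T : Type) (A : {ffun 'I_k -> T}) i x y : upd (upd A i x) i y = upd A i y.
Proof. by apply/ffunP => j; rewrite !ffunE; case: eqP. Qed.

Lemma agree (mu1 mu2 : {ffun 'I_k -> V} -> W) (P : 'I_k -> V -> Prop) :
  slotlin mu1 -> slotlin mu2 ->
  (forall A : {ffun 'I_k -> V}, (forall i, P i (A i)) -> mu1 A = mu2 A) ->
  forall A : {ffun 'I_k -> V}, (forall i, spn (P i) (A i)) -> mu1 A = mu2 A.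
Proof.
move=> [L1 Z1] [L2 Z2] base.
suff Q : forall j (A : {ffun 'I_k -> V}), (forall i : 'I_k, (j <= i)%N -> P i (A i)) ->
   (forall i : 'I_k, (i < j)%N -> spn (P i) (A i)) -> mu1 A = mu2 A.
  by move=> A hA; apply: (Q k) => // i; rewrite leqNgt ltn_ord.
elim=> [|j IH] A hP hS; first by apply: base => i; apply: hP.
case: (ltnP j k) => hjk; last first.
  apply: IH => i hi; first by exfalso; move: hi; rewrite leqNgt (leq_trans (ltn_ord i) hjk).
  by apply: hS; apply: ltn_trans hi _.
pose i0 : 'I_k := Ordinal hjk.
have hsp : spn (P i0) (A i0) by apply: hS.
rewrite -(upd_id A i0).
elim: hsp => [|c x y hx _ IHy]; first by rewrite Z1 Z2.
rewrite L1 L2 IHy; congr (_ *: _ + _).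
apply: IH => i hi.
  rewrite ffunE; case: eqP => [->//|/eqP ne]; apply: hP.
  by move: ne; rewrite -val_eqE /= => ne; lia.
rewrite ffunE; case: eqP => [e|_]; first by move: hi; rewrite e ltnn.
by apply: hS; apply: ltnW.
Qed.
End Agree.

Lemma spn_sum_cond (F : fieldType) (V : zmodType) (act : F -> V -> V) P (I : Type) (r : seq I) (Q : pred I) (g : I -> V) :
  (forall i, Q i -> spn act P (g i)) -> spn act P (\sum_(i <- r | Q i) g i).
Proof.
move=> H; elim: r => [|i r IH]; first by rewrite big_nil; apply: spn0.
rewrite big_cons; case: ifP => hi //; by apply: spnD => //; apply: H.
Qed.
Section Lam.
Variables (F : fieldType) (N : nat) (W : lmodType F) (G : 'X_{1..N} -> W).

Definition Lam (p : {mpoly F[N]}) : W := \sum_(m <- msupp p) p@_m *: G m.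

Lemma LamE (p : {mpoly F[N]}) K : (msize p <= K)%N -> Lam p = \sum_(m : 'X_{1..N < K}) p@_m *: G m.
Proof.
move=> le_pi; set I : subFinType _ := 'X_{1..N < K}.
rewrite /Lam (ssrcomplements.big_mksub I) ?msupp_uniq //=; first last.
  by move=> x /msize_mdeg_lt /leq_trans; apply.
rewrite big_rmcond //= => j /memN_msupp_eq0 ->.
by rewrite scale0r.
Qed.

Lemma Lam_lin c p q : Lam (c *: p + q) = c *: Lam p + Lam q.
Proof.
set K := (msize p + msize q + msize (c *: p + q))%N.
rewrite !(LamE (K := K)); try by rewrite /K; lia.
rewrite scaler_sumr -big_split /=; apply: eq_bigr => m _.
by rewrite mcoeffD mcoeffZ scalerDl scalerA.
Qed.

Lemma Lam0 : Lam 0 = 0.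
Proof. by rewrite /Lam msupp0 big_nil. Qed.

Lemma LamX m : Lam 'X_[m] = G m.
Proof. by rewrite /Lam msuppX big_seq1 mcoeffX eqxx scale1r. Qed.

Lemma Lam_sum (I : Type) (r : seq I) (c : I -> F) (X : I -> {mpoly F[N]}) :
  Lam (\sum_(i <- r) (c i)%:MP * X i) = \sum_(i <- r) c i *: Lam (X i).
Proof.
elim: r => [|i r IH]; first by rewrite !big_nil Lam0.
by rewrite !big_cons mul_mpolyC Lam_lin IH.
Qed.
End Lam.
Section Tag.
Variables (F : fieldType) (k : nat) (d : 'I_k -> nat) (n : nat).
Local Notation N := (nvars d n).
Local Notation tp := (tpoly F d n).

Definition tagp (i : 'I_k) (q : tp) : Prop :=
  forall m, m \in msupp q -> forall j : 'I_N, (m j != 0)%N -> tag (enum_val j) = i.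

Lemma tagp0 i : tagp i 0.
Proof. by move=> m; rewrite msupp0. Qed.

Lemma tagp_nat i (b : bool) : tagp i b%:R.
Proof.
case: b => m; last by rewrite msupp0.
by rewrite msupp1 inE => /eqP -> j; rewrite mnm0E.
Qed.

Lemma tagpD i p q : tagp i p -> tagp i q -> tagp i (p + q).
Proof.
move=> hp hq m /msuppD_le; rewrite mem_cat => /orP[]; [exact: hp | exact: hq].
Qed.

Lemma tagpM i p q : tagp i p -> tagp i q -> tagp i (p * q).
Proof.
move=> hp hq m /msuppM_le /allpairsP [[m1 m2] [/= h1 h2 ->]] j.
rewrite mnmDE; case: (eqVneq (m1 j) 0%N) => [e|]; last by move=> ne _; exact: hp _ h1 j ne.
by rewrite e add0n => /(hq _ h2).
Qed.

Lemma tagp_sum i (I : Type) (r : seq I) (g : I -> tp) :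
  (forall x, tagp i (g x)) -> tagp i (\sum_(x <- r) g x).
Proof.
move=> H; elim: r => [|x r IH]; first by rewrite big_nil; apply: tagp0.
by rewrite big_cons; apply: tagpD.
Qed.

Lemma tagpX i (x : 'I_(d i)) (a b : 'I_n) : tagp i 'X_(tind x a b).
Proof.
move=> m; rewrite msuppX inE => /eqP -> j; rewrite mnm1E.
by case: (tind x a b =P j) => [<- _|]; [rewrite tag_tind | ].
Qed.

Lemma tagp_wordval i (w : seq 'I_(d i)) a b :
  tagp i ((wordval (@Defs.genmx F k d n i) w) a b).
Proof.
elim: w a b => [|x w IH] a b /=; first by rewrite mxE; apply: tagp_nat.
rewrite mxE; apply: tagp_sum => j; apply: tagpM => //.
by rewrite mxE; apply: tagpX.
Qed.

Definition actp (c : F) (B : 'M[tp]_n) : 'M[tp]_n := c%:MP *: B.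

Definition Pt (i : 'I_k) (B : 'M[tp]_n) : Prop :=
  exists (a0 b0 : 'I_n) (m : 'X_{1..N}),
    (forall j : 'I_N, (m j != 0)%N -> tag (enum_val j) = i) /\ B = 'X_[m] *: delta_mx a0 b0.

Lemma spn_tag i (B : 'M[tp]_n) : (forall a b, tagp i (B a b)) -> spn actp (Pt i) B.
Proof.
move=> H; rewrite (matrix_sum_delta B).
apply: spn_sum => a; apply: spn_sum => b.
rewrite {1}(mpolyE (B a b)) scaler_suml big_seq.
apply: spn_sum_cond => m hm.
rewrite -mul_mpolyC -scalerA; apply: spn_act.
exists a, b, m; split => //; exact: (H a b m hm).
Qed.
End Tag.
Lemma natentry_val (R : pzRingType) n (A : 'M[R]_n) (a b : 'I_n) :
  natentry A a b = A a b.
Proof.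
rewrite /natentry; case: insubP => [a' _ ea|]; last by rewrite ltn_ord.
case: insubP => [b' _ eb|]; last by rewrite ltn_ord.
by congr (A _ _); apply: val_inj.
Qed.

Section Main.
Variables (F : fieldType) (k : nat) (d : 'I_k -> nat) (n : nat) (L : fieldType)
  (iota : {rmorphism F -> L}) (v : forall i : 'I_k, 'I_(d i) -> 'M[L]_n)
  (W : lmodType F) (mu : {ffun 'I_k -> 'M[L]_n} -> W) (Hmu : multilinear iota mu).
Local Notation N := (nvars d n).
Local Notation tp := (tpoly F d n).

Definition valL (j : 'I_N) : L :=
  let t := enum_val j in v (tagged t).1.1 (tagged t).1.2 (tagged t).2.

Definition ev : {rmorphism tp -> L} := mmap iota valL.

Definition restr (i : 'I_k) (M : 'X_{1..N}) : 'X_{1..N} :=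
  [multinom (if tag (enum_val j) == i then M j else 0%N) | j < N].

Definition Gm (a b : {ffun 'I_k -> 'I_n}) (M : 'X_{1..N}) : W :=
  mu [ffun i => mmap1 valL (restr i M) *: delta_mx (a i) (b i)].

Definition mu1 (A : {ffun 'I_k -> 'M[tp]_n}) : W :=
  \sum_(a : {ffun 'I_k -> 'I_n}) \sum_(b : {ffun 'I_k -> 'I_n})
     Lam (Gm a b) (\prod_(i < k) A i (a i) (b i)).

Definition mu2 (A : {ffun 'I_k -> 'M[tp]_n}) : W := mu [ffun i => map_mx ev (A i)].

Lemma mu_zero (A : {ffun 'I_k -> 'M[L]_n}) i : mu (upd A i 0) = 0.
Proof.
have := Hmu A i (-1) 0 0.
by rewrite scaler0 addr0 scaleN1r addNr.
Qed.

Lemma prod_upd (R : comNzRingType) (A : {ffun 'I_k -> 'M[R]_n}) i z (a b : {ffun 'I_k -> 'I_n}) :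
  \prod_(j < k) upd A i z j (a j) (b j) =
  z (a i) (b i) * \prod_(j < k | j != i) A j (a j) (b j).
Proof.
rewrite (bigD1 i) //= ffunE eqxx; congr (_ * _).
by apply: eq_bigr => j hj; rewrite ffunE (negbTE hj).
Qed.

Lemma slot1 : slotlin (@actp F k d n) mu1.
Proof.
split => [A i c x y|A i].
  rewrite /mu1 scaler_sumr -big_split; apply: eq_bigr => a _ /=.
  rewrite scaler_sumr -big_split; apply: eq_bigr => b _ /=.
  by rewrite !prod_upd /actp !mxE mulrDl -mulrA mul_mpolyC Lam_lin.
rewrite /mu1 big1 // => a _; rewrite big1 // => b _.
by rewrite prod_upd mxE mul0r Lam0.
Qed.

Lemma map_upd (A : {ffun 'I_k -> 'M[tp]_n}) i z :
  [ffun j => map_mx ev (upd A i z j)] = upd [ffun j => map_mx ev (A j)] i (map_mx ev z).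
Proof. by apply/ffunP => j; rewrite !ffunE; case: eqP => // _; rewrite ffunE. Qed.

Lemma slot2 : slotlin (@actp F k d n) mu2.
Proof.
split => [A i c x y|A i].
  rewrite /mu2 !map_upd -Hmu; congr (mu (upd _ i _)).
  apply/matrixP => a b; rewrite !mxE rmorphD rmorphM /= mmapC.
  by [].
rewrite /mu2 (map_upd A i 0) (_ : map_mx ev 0 = 0) ?mu_zero //.
by apply/matrixP => a b; rewrite !mxE rmorph0.
Qed.

Lemma restr_sum (m : 'I_k -> 'X_{1..N}) i :
  (forall j (t : 'I_N), (m j t != 0)%N -> tag (enum_val t) = j) ->
  restr i (\sum_(j < k) m j)%MM = m i.
Proof.
move=> H; apply/mnmP => t; rewrite mnmE mnm_sumE.
case: eqP => [ht|ht].
  rewrite (bigD1 i) //= big1 ?addn0 // => j hj.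
  case: (eqVneq (m j t) 0%N) => // /H; rewrite ht => eij.
  by rewrite eij eqxx in hj.
by case: (eqVneq (m i t) 0%N) => // /H e; exfalso; exact: ht e.
Qed.

Lemma base12 (A : {ffun 'I_k -> 'M[tp]_n}) : (forall i, Pt i (A i)) -> mu1 A = mu2 A.
Proof.
move=> H.
have [u Hu] := fin_all_exists (U := fun _ => ('I_n * 'I_n * 'X_{1..N})%type)
  (P := fun i u => (forall j : 'I_N, (u.2 j != 0)%N -> tag (enum_val j) = i) /\
                    A i = 'X_[u.2] *: delta_mx u.1.1 u.1.2)
  (fun i => let: ex_intro a0 (ex_intro b0 (ex_intro m hm)) := H i in ex_intro _ (a0, b0, m) hm).
pose af := [ffun i => (u i).1.1]; pose bf := [ffun i => (u i).1.2].
pose m := fun i => (u i).2.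
have hm j (t : 'I_N) : (m j t != 0)%N -> tag (enum_val t) = j by apply: (Hu j).1.
have eA : A = [ffun i => 'X_[m i] *: delta_mx (af i) (bf i)].
  by apply/ffunP => i; rewrite !ffunE (Hu i).2.
have prodE (a b : {ffun 'I_k -> 'I_n}) : \prod_(i < k) A i (a i) (b i) =
    if (a == af) && (b == bf) then 'X_[\sum_(i < k) m i] else 0.
  rewrite eA (eq_bigr (fun i => if (af i == a i) && (bf i == b i) then 'X_[m i] else 0)).
    rewrite prod_ifX; congr (if _ then _ else _).
    apply/forallP/andP => [hh|[/eqP ea /eqP eb] i]; last by rewrite ea eb !eqxx.
    split; apply/eqP/ffunP => i; have /andP[/eqP e1 /eqP e2] := hh i.
      by rewrite e1.
    by rewrite e2.
  move=> i _; rewrite ffunE !mxE [af i == _]eq_sym [bf i == _]eq_sym.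
  by case: (_ && _); rewrite ?mulr1 ?mulr0.
rewrite /mu1 (bigD1 af) //= [X in _ + X = _]big1 ?addr0; last first.
  by move=> a ha; apply: big1 => b _; rewrite prodE (negbTE ha) Lam0.
rewrite (bigD1 bf) //= [X in _ + X = _]big1 ?addr0; last first.
  by move=> b hb; rewrite prodE eqxx (negbTE hb) Lam0.
rewrite prodE !eqxx /= LamX /Gm /mu2; congr mu; apply/ffunP => i.
rewrite !ffunE restr_sum // eA ffunE.
apply/matrixP => a b; rewrite !mxE rmorphM /= mmapX.
by rewrite !ffunE rmorph_nat.
Qed.

Lemma ev_genmx i (x : 'I_(d i)) : map_mx ev (@Defs.genmx F k d n i x) = v x.
Proof.
by apply/matrixP => a b; rewrite !mxE /ev /= mmapX mmap1U /valL tindK.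
Qed.

Lemma main_sum (f : pcpoly F d) (hn : (0 < n)%N) : Phi n f = 0 ->
  \sum_(p <- f) p.1 *: mu [ffun i => wordval (v (i := i)) (p.2 i)] = 0.
Proof.
move=> HP.
have key (p : F * mono d) : mu [ffun i => wordval (v (i := i)) (p.2 i)] =
    mu1 [ffun i => wordval (@Defs.genmx F k d n i) (p.2 i)].
  symmetry; rewrite (agree slot1 slot2 base12).
    rewrite /mu2; congr mu; apply/ffunP => i; rewrite !ffunE wordval_map.
    by apply: eq_wordval => x; exact: ev_genmx.
  by move=> i; rewrite ffunE; apply: spn_tag => a b; exact: tagp_wordval.
rewrite (eq_bigr _ (fun p _ => congr1 (fun w => p.1 *: w) (key p))) /mu1.
under eq_bigr do rewrite scaler_sumr.
rewrite exchange_big /=; apply: big1 => a _.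
under eq_bigr do rewrite scaler_sumr.
rewrite exchange_big /=; apply: big1 => b _.
rewrite -Lam_sum.
have [r hr] := digf_surj hn a; have [c hc] := digf_surj hn b.
transitivity (Lam (Gm a b) ((Phi n f) r c)); last by rewrite HP mxE Lam0.
congr Lam; rewrite PhiE summxE; apply: eq_bigr => p _; rewrite !mxE; congr (_ * _).
by apply: eq_bigr => i _; rewrite !ffunE hr hc natentry_val.
Qed.

End Main.

Theorem proposition1 (F : fieldType) (Finf : infinite_type F)
  (k : nat) (hk : (0 < k)%N) (d : 'I_k -> nat) (f : pcpoly F d)
  (n : nat) (hn : (0 < n)%N) (L : fieldType) (iota : {rmorphism F -> L}) :
  (pcid_holds iota n f <-> Phi n f = 0) /\
  (deg_lt f n ->
     (pcid_holds iota n f <-> Psi n f = 0) /\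
     (pcid_holds iota n f <-> pc_zero f)).
Proof.
have P12 : pcid_holds iota n f <-> Phi n f = 0.
  split; first exact: (@pc_Phi F Finf k d n f L iota).
  move=> HP v W mu Hmu; rewrite /= big_map /=.
  have H := (@main_sum F k d n L iota v W mu Hmu f hn HP).
  exact H.
split; [exact P12 | move=> Hd].
have A1 : Phi n f = 0 -> Psi n f = 0 := @Phi_Psi F k d n f.
have A2 : Psi n f = 0 -> pc_zero f := fun H => @Psi_pc F k d n hn f H Hd.
have A3 : pc_zero f -> Phi n f = 0 := @zero_Phi F k d n f.
Time split; split.
- move=> H; apply A1; apply P12; exact H.
- move=> H; apply P12; apply A3; apply A2; exact H.
- move=> H; apply A2; apply A1; apply P12; exact H.
- move=> H; apply P12; apply A3; exact H.
Qed.
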